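(* Consider $n>1$ agents with states $\boldsymbol{x}_i(t)\in\mathbb{R}^d$ evolving by $\dot{\boldsymbol{x}}(t)=-L(t)\boldsymbol{x}(t)$, where $\boldsymbol{x}=[\boldsymbol{x}_1^\top,\dots,\boldsymbol{x}_n^\top]^\top\in\mathbb{R}^{dn}$ and $L(t)$ is the matrix-valued Laplacian of a matrix-weighted switching network $\mathcal{G}(t)$ satisfying Assumption 2 (described in the context). If the system achieves cluster consensus, namely there exists $\boldsymbol{x}^*\in\mathbb{R}^{dn}$ with $\lim_{t\to\infty}\boldsymbol{x}(t)=\boldsymbol{x}^*$, then $\lim_{t\to\infty}L(t)\boldsymbol{x}^*=\boldsymbol{0}$.
   Context: A matrix-weighted switching network $\mathcal{G}(t)=(\mathcal{V},\mathcal{E}(t),A(t))$ has node set $\mathcal{V}=\{1,\dots,n\}$ and edge set $\mathcal{E}(t)$; each edge $(i,j)\in\mathcal{E}(t)$ carries a symmetric weight $A_{ij}(t)\in\mathbb{R}^{d\times d}$ which is either positive (semi-)definite or negative (semi-)definite, with $A_{ij}(t)=A_{ji}(t)$, $A_{ii}(t)=0_{d\times d}$, and $A_{ij}(t)=0_{d\times d}$ if $(i,j)\notin\mathcal{E}(t)$. For such a weight, $|A_{ij}|=A_{ij}$ if $A_{ij}\succeq 0$ and $|A_{ij}|=-A_{ij}$ if $A_{ij}\preceq 0$; $\mathrm{sgn}(A_{ij})=1$ if $A_{ij}\succeq0$ (nonzero), $-1$ if $A_{ij}\preceq 0$ (nonzero), $0$ if $A_{ij}=0$. The agent dynamics are $\dot{\boldsymbol{x}}_i=-\sum_{j\in\mathcal{N}_i(t)}|A_{ij}(t)|(\boldsymbol{x}_i-\mathrm{sgn}(A_{ij}(t))\boldsymbol{x}_j)$,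 $\mathcal{N}_i(t)=\{j:(i,j)\in\mathcal{E}(t)\}$. With $A(t)=[A_{ij}(t)]\in\mathbb{R}^{dn\times dn}$ (block matrix) and $D(t)=\mathrm{diag}(D_1(t),\dots,D_n(t))$, $D_i(t)=\sum_{j\in\mathcal{N}_i(t)}|A_{ij}(t)|$, the matrix-valued Laplacian is $L(t)=D(t)-A(t)$, and the stacked dynamics read $\dot{\boldsymbol{x}}=-L(t)\boldsymbol{x}$. Assumption 1: there is a sequence $\{t_k\}_{k\in\mathbb{N}}$ with $t_0=0$, $t_k\to\infty$, $t_{k+1}-t_k\ge\alpha$ for some $\alpha>0$ and all $k$, and $\mathcal{G}(t)$ is constant on each $[t_k,t_{k+1})$. Assumption 2: Assumption 1 holds, and $\mathcal{G}(t)$ is always chosen from a finite set $\{\mathcal{G}_1,\dots,\mathcal{G}_M\}$, each $\mathcal{G}_i$ appearing infinitely many times in the sequence. Cluster consensus: there is a partition $\mathcal{V}_1,\dots,\mathcal{V}_l$ of $\mathcal{V}$ such that agents in the same part have the same limit $\lim_{t\to\infty}\boldsymbol{x}_i(t)$ and agents in different parts have different limits. *)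

(* Defs.v *)
From HB Require Import structures.
From mathcomp Require Import all_boot all_order all_algebra.
From mathcomp Require Import all_classical all_reals all_analysis.

Set Implicit Arguments.
Unset Strict Implicit.
Unset Printing Implicit Defensive.

Import Order.TTheory GRing.Theory Num.Theory.
Import numFieldNormedType.Exports.
Local Open Scope ring_scope.

(* The state of the n agents is stored as a d x n matrix whose i-th column
   is x_i (this is the stacked vector x in R^{dn}, reshaped). *)

Section Defs.
Variable R : realType.

Definition psdm d (A : 'M[R]_d) : Prop :=
  forall v : 'cV[R]_d, 0 <= (v^T *m A *m v) 0 0.
Definition nsdm d (A : 'M[R]_d) : Prop :=
  forall v : 'cV[R]_d, (v^T *m A *m v) 0 0 <= 0.

Definition absm d (A : 'M[R]_d) : 'M[R]_d :=
  if `[< psdm A >] then A else - A.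

(* a matrix-weighted network: a weight function W with
   W i j symmetric, W i j = W j i, W i i = 0, and each W i j psd or nsd
   (an absent edge carries the zero weight) *)
Definition is_mw_graph n d (W : 'I_n -> 'I_n -> 'M[R]_d) : Prop :=
  forall i j : 'I_n,
    [/\ (W i j)^T = W i j, W i j = W j i, W i i = 0 &
        psdm (W i j) \/ nsdm (W i j)].

Definition degm n d (W : 'I_n -> 'I_n -> 'M[R]_d) (i : 'I_n) : 'M[R]_d :=
  \sum_(j < n) absm (W i j).

Definition lapl n d (W : 'I_n -> 'I_n -> 'M[R]_d) (X : 'M[R]_(d, n))
  : 'M[R]_(d, n) :=
  \matrix_(a < d, i < n)
    ((degm W i *m col i X - \sum_(j < n) (W i j *m col j X)) a 0).

End Defs.

(* Main.v *)
Require Import Defs.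
From HB Require Import structures.
From mathcomp Require Import all_boot all_order all_algebra.
From mathcomp Require Import all_classical all_reals all_analysis.
From mathcomp Require Import lra.
Import Order.TTheory GRing.Theory Num.Theory.
Import numFieldNormedType.Exports.
Local Open Scope ring_scope.
Local Open Scope classical_set_scope.
Lemma lapl_entry (R : realType) n d (W : 'I_n -> 'I_n -> 'M[R]_d) (X : 'M[R]_(d,n)) a i :
  lapl W X a i = \sum_b degm W i a b * X b i - \sum_j \sum_b W i j a b * X b j.
Proof.
rewrite mxE !mxE summxE; congr (_ - _).
  by apply: eq_bigr => b _; rewrite mxE.
by apply: eq_bigr => j _; rewrite mxE; apply: eq_bigr => b _; rewrite mxE.
Qed.
Lemma cvg_sumF (R : realType) (T : Type) (F : set_system T) {FF : Filter F} (I : Type)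
  (r : seq I) (f : I -> T -> R) (l : I -> R) :
  (forall i, f i @ F --> l i) -> (fun t => \sum_(i <- r) f i t) @ F --> \sum_(i <- r) l i.
Proof.
move=> H; elim: r => [|a r IH].
  rewrite big_nil; under eq_fun do rewrite big_nil; exact: cvg_cst.
rewrite big_cons; under eq_fun do rewrite big_cons.
exact: cvgD.
Qed.
Lemma derive_entry (R : realType) p q (x : R -> 'M[R]_(p,q)) (t : R) (D : 'M[R]_(p,q)) a b :
  is_derive t 1 x D -> is_derive t 1 (fun s => x s a b) (D a b).
Proof.
move=> H; have dx : derivable x t 1 by case: H.
apply: DeriveDef; first exact: ((derivable_mxP _ _ _).1 dx a b).
by rewrite -(@derive_val _ _ _ _ _ _ _ H) derive_mx // mxE.
Qed.
Lemma entry_le (R : realType) p q (M : 'M[R]_(p,q)) a b : `|M a b| <= `|M|.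
Proof.
rewrite [leRHS]/Num.Def.normr/= mx_normrE.
by apply: le_trans; last exact: (le_bigmax _ _ (a, b)).
Qed.
Lemma cvg_entry (R : realType) p q (T : Type) (F : set_system T) {FF : Filter F}
  (x : T -> 'M[R]_(p,q)) (X : 'M[R]_(p,q)) a b : x @ F --> X -> (fun t => x t a b) @ F --> X a b.
Proof.
move=> /cvgrPdist_lt hx; apply/cvgrPdist_lt => e e0.
apply: filterS (hx e e0) => t; apply: le_lt_trans.
have := @entry_le _ _ _ (X - x t) a b; by rewrite !mxE.
Qed.
Theorem lemma3 (R : realType) (n d M : nat)
  (Gs : 'I_M -> 'I_n -> 'I_n -> 'M[R]_d)  (* the finite set {G_1,...,G_M} *)
  (sw : R -> 'I_M)                        (* G(t) = Gs (sw t) *)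
  (tk : nat -> R) (alpha : R)
  (x : R -> 'M[R]_(d, n)) (xstar : 'M[R]_(d, n)) :
  (1 < n)%N ->
  (forall m, is_mw_graph (Gs m)) ->
  (* Assumption 1 *)
  tk 0%N = 0 -> tk @ \oo --> +oo -> 0 < alpha ->
  (forall k, alpha <= tk k.+1 - tk k) ->
  (forall k t, tk k <= t < tk k.+1 -> sw t = sw (tk k)) ->
  (* Assumption 2: every graph of the finite set appears infinitely often *)
  (forall (m : 'I_M) (k : nat), exists k', (k <= k')%N /\ sw (tk k') = m) ->
  (* x solves  x' = - L(t) x  on [0, +oo) *)
  (forall k, {within `[tk k, tk k.+1], continuous x}) ->
  (forall k t, tk k < t < tk k.+1 ->
     is_derive t 1 x (- lapl (Gs (sw (tk k))) (x t))) ->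
  (* cluster consensus: x(t) converges *)
  x @ +oo --> xstar ->
  (fun t => lapl (Gs (sw t)) xstar) @ +oo --> (0 : 'M[R]_(d, n)).
Proof.
move=> n1 Hg tk0 tkoo alpha0 Halpha Hsw Hinf Hcont Hder Hx.
have key : forall m, lapl (Gs m) xstar = 0.
  move=> m; apply/matrixP => a i; rewrite [RHS]mxE.
  set c := lapl (Gs m) xstar a i.
  apply/eqP; apply/negPn/negP => c0.
  have hc : (fun t => lapl (Gs m) (x t) a i) @ +oo --> c.
    under eq_fun do rewrite lapl_entry.
    rewrite /c lapl_entry.
    apply: cvgB; apply: cvg_sumF => b.
      apply: cvgMl_tmp; exact: (@cvg_entry R d n R _ _ x xstar b i Hx).
    apply: cvg_sumF => b'; apply: cvgMl_tmp; exact: (@cvg_entry R d n R _ _ x xstar b' b Hx).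
  have hg : (fun t => x t a i) @ +oo --> xstar a i by apply: cvg_entry.
  have e0 : 0 < `|c| by rewrite normr_gt0.
  set e := `|c|.
  have H12 : \forall t \near +oo,
     `|c - lapl (Gs m) (x t) a i| < e / 2 /\ `|xstar a i - x t a i| < alpha * e / 4.
    near=> t; split.
      near: t; have := (cvgrPdist_lt _ _).1 hc (e/2); rewrite divr_gt0 //; apply => //.
    near: t; have := (cvgrPdist_lt _ _).1 hg (alpha * e / 4); rewrite divr_gt0 ?mulr_gt0 //; apply => //.
  case: H12 => T [_ HT].
  have [N _ HN] := (cvgryPgt tk).1 tkoo T.
  have [k [Nk swk]] := Hinf m N.
  have Tt0 : T < tk k by apply: HN.
  set t0 := tk k.
  have alt : t0 < t0 + alpha by rewrite ltrDl.
  have le1 : t0 + alpha <= tk k.+1 by have := Halpha k; rewrite lerBrDl addrC.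
  have Hd : forall s, s \in `]t0, t0 + alpha[%R ->
      is_derive s 1 (fun s => x s a i) (- lapl (Gs m) (x s) a i).
    move=> s; rewrite (@in_itv _ R) /= => /andP[s0 s1].
    have hs : tk k < s < tk k.+1 by rewrite s0 /=; exact: (lt_le_trans s1 le1).
    by have := @derive_entry _ _ _ _ _ _ a i (Hder k s hs); rewrite swk mxE.
  have Hc : {within `[t0, t0 + alpha], continuous (fun s => x s a i)}.
    apply: (@continuous_subspaceW _ _ _ `[tk k, tk k.+1]).
      move=> s /=; rewrite !in_itv /= => /andP[s0 s1]; rewrite s0 /=.
      exact: (le_trans s1 le1).
    move=> s; apply: (@cvg_entry _ _ _ _ _ _ _ _ a i); exact: Hcont.
  have [xi xiin Heq] := @MVT R (fun s => x s a i) (fun s => - lapl (Gs m) (x s) a i) t0 (t0+alpha) alt Hd Hc.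
  move: xiin; rewrite in_itv /= => /andP[xi0 xi1].
  have [hxi _] := HT xi (lt_trans Tt0 xi0).
  have [_ h0] := HT t0 Tt0.
  have [_ h1] := HT (t0 + alpha) (lt_trans Tt0 alt).
  set h := lapl (Gs m) (x xi) a i in hxi Heq.
  have h3 : e / 2 < `|h|.
    have : e <= `|c - h| + `|h| by rewrite /e -{1}(subrK h c) ler_normD.
    move: hxi; lra.
  have h2 : `|x (t0 + alpha) a i - x t0 a i| < alpha * e / 2.
    have := ler_normD (x (t0 + alpha) a i - xstar a i) (xstar a i - x t0 a i).
    rewrite addrA subrK => hle; have e1 := distrC (x (t0 + alpha) a i) (xstar a i).
    move: hle h0 h1 e1; lra.
  rewrite Heq addrAC subrr add0r normrM normrN (gtr0_norm alpha0) in h2.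
  have : e / 2 * alpha < `|h| * alpha by rewrite ltr_pM2r.
  move: h2; lra.
apply: cvg_near_cst.
suff H : forall t, 0 <= t -> lapl (Gs (sw t)) xstar = 0.
  exists 0; split; first by rewrite realE lexx.
  by move=> t t0; apply: H; exact: ltW.
move=> t t0.
have [N _ HN] := (cvgryPgt tk).1 tkoo t.
have : t < tk N by apply: HN; rewrite /= leqnn.
elim: N {HN} => [|N IH] ht.
  by exfalso; rewrite tk0 in ht; move: ht t0; lra.
have [/IH //|hle] := ltP t (tk N).
by rewrite (Hsw N t) ?key // hle ht.
Unshelve. all: by end_near.
Qed.
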